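(* Let $T:S_n\to GL(d,\mathbb{C})$ be a representation with character $\chi$, and let $\sigma,\tau\in S_n$ both have the same prime order $p$. Then $T(\sigma)$ and $T(\tau)$ are similar if and only if $\chi(\sigma)=\chi(\tau)$. *)

(* Defs.v *)
From HB Require Import structures.
From mathcomp Require Import all_boot all_order all_algebra all_fingroup all_solvable all_field all_character.
Set Implicit Arguments. Unset Strict Implicit. Unset Printing Implicit Defensive.

(* Main.v *)
Require Import Defs.
From HB Require Import structures.
From mathcomp Require Import all_boot all_order all_algebra all_fingroup all_solvable all_field all_character.
Import GRing.Theory Num.Theory.
Local Open Scope ring_scope.

Lemma charX_aut (gT : finGroupType) (G : {group gT}) (chi : 'CF(G)) (x : gT) k
  (u : {rmorphism algC -> algC}) :
  chi \is a character -> x \in G ->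
  (forall z, z ^+ #[x]%g = 1 -> u z = z ^+ k) -> chi (x ^+ k)%g = u (chi x).
Proof.
move=> Nchi Gx Hu.
have sHG : <[x]>%g \subset G by rewrite cycle_subG.
have Hx : x \in <[x]>%g by rewrite cycle_id.
have Hxk : (x ^+ k)%g \in <[x]>%g by rewrite groupX.
rewrite -(cfResE _ sHG Hxk) -(cfResE _ sHG Hx).
have [r ->] := char_sum_irr (cfRes_char <[x]>%g Nchi).
rewrite !sum_cfunE rmorph_sum; apply: eq_bigr => i _.
have Li : 'chi[<[x]>%g]_i \is a linear_char by rewrite irr_cyclic_lin ?cycle_cyclic.
rewrite lin_charX // Hu // -lin_charX // expg_order.
exact: lin_char1.
Qed.

Theorem corollary3p4 (n d p : nat)
    (T : mx_representation algC [set: 'S_n]%G d)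
    (sigma tau : 'S_n) :
  prime p -> #[sigma]%g = p -> #[tau]%g = p ->
  (similar_in unitmx (T sigma) (T tau) <->
   cfRepr T sigma = cfRepr T tau).
Proof.
move=> pr_p os ot; split.
  case=> P uP /(similarP uP) eq.
  rewrite !cfunE !inE /= !mulr1n.
  have -> : T tau = P *m T sigma *m invmx P by rewrite eq -mulmxA mulmxV ?mulmx1.
  by rewrite mxtrace_mulC mulmxA mulVmx ?mul1mx.
move=> Echi.
have dvd : (#[tau]%g %| #[sigma]%g)%N by rewrite os ot.
pose f := eltm_morphism dvd.
have sH : <[sigma]>%g \subset (f @*^-1 [set: 'S_n])%g.
  apply/subsetP=> y Hy; apply/morphpreP; split=> //; exact: in_setT.
pose rS := subg_repr T (subsetT <[sigma]>%g).
pose rT := subg_repr (morphpre_repr f T) sH.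
have: cfRepr rS == cfRepr rT.
  apply/eqP/esym/cfun_inP=> y /cycleP[k ->].
  rewrite !cfunE mem_cycle /= !mulr1n /= morphX ?cycle_id //= eltm_id.
  have := Echi; rewrite !cfunE !inE /= !mulr1n => E1.
  have [cop | ndv] := boolP (coprime k p).
    have [u Hu] := Qn_aut_exists cop.
    have chT := cfRepr_char T.
    have := @charX_aut _ _ _ sigma k u chT (in_setT sigma).
    have := @charX_aut _ _ _ tau k u chT (in_setT tau).
    rewrite os ot !cfunE !inE /= !mulr1n => -> // -> //.
    by rewrite E1.
  have pk : (p %| k)%N by move: ndv; rewrite coprime_sym prime_coprime // negbK.
  have [m ->] := dvdnP pk.
  have e1 : (tau ^+ p = 1)%g by rewrite -ot expg_order.
  have e2 : (sigma ^+ p = 1)%g by rewrite -os expg_order.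
  by rewrite (mulnC m) !expgM e1 e2 !expg1n.
move/cfRepr_rsimP=> [B _ fB eqB].
have uB : B \in unitmx by rewrite -row_free_unit.
have h : T sigma *m B = B *m T tau by have := eqB sigma (cycle_id sigma); rewrite /= eltm_id.
exists (invmx B); first by rewrite unitmx_inv.
apply/(similarP _); first by rewrite unitmx_inv.
rewrite -[LHS]mulmx1 -(mulmxV uB) !mulmxA -(mulmxA _ (T sigma)) h.
by rewrite !mulmxA mulVmx // mul1mx.
Qed.
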